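(* Let $H\in\mathbb{R}^{N\times n}$ with $H^TH$ positive definite, let $c\ge 0$ be an integer, and for $\bar\mu>0$ let $R=\bar\mu I$. Define $F(R)=R(H^TH+R)^{-1}$, $F_{ar}(R)=(H^TH)^{-1}F(R)^{c+1}$, $\mathrm{Cond}(R)=\|H^TH+R\|\,\|(H^TH+R)^{-1}\|$ and $\mathrm{Obj}(R)=\|F_{ar}(R)\|\cdot\mathrm{Cond}(R)$. Then, as functions of $\bar\mu$, $\mathrm{Cond}(R)$ is a bounded decreasing function and $\|F_{ar}(R)\|$ is a bounded increasing function; and the problem $\min_{R\in S_+^n}\mathrm{Obj}(R)$ has a global minimum.
   Context: $\|\cdot\|$ is the spectral norm; $S_+^n$ is the set of $n\times n$ symmetric positive semidefinite matrices. $F_{ar}(R)$ is the residual $(H^TH)^{-1}-(H^TH+R)^{-1}\sum_{i=0}^cF(R)^i$ of approximating $(H^TH)^{-1}$ by the order-$c$ regularized inverse, which equals $(H^TH)^{-1}F(R)^{c+1}$. *)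

(* Defs.v *)
From HB Require Import structures.
From mathcomp Require Import all_boot all_order all_algebra.
From mathcomp Require Import boolp classical_sets reals.
Set Implicit Arguments. Unset Strict Implicit. Unset Printing Implicit Defensive.
Import Order.TTheory GRing.Theory Num.Theory.
Local Open Scope ring_scope.
Local Open Scope classical_set_scope.

Definition vnorm2 (R : realType) (n : nat) (v : 'cV[R]_n) : R :=
  Num.sqrt (\sum_(i < n) v i 0 ^+ 2).

Definition specnorm (R : realType) (m n : nat) (A : 'M[R]_(m, n)) : R :=
  sup [set r : R | exists x : 'cV[R]_n, vnorm2 x <= 1 /\ r = vnorm2 (A *m x)].

Definition posdef (R : realType) (n : nat) (A : 'M[R]_n) : Prop :=
  A^T = A /\ forall x : 'cV[R]_n, x != 0 -> 0 < (x^T *m A *m x) 0 0.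
Definition psd (R : realType) (n : nat) (A : 'M[R]_n) : Prop :=
  A^T = A /\ forall x : 'cV[R]_n, 0 <= (x^T *m A *m x) 0 0.

Definition gram (R : realType) (N n : nat) (H : 'M[R]_(N, n)) : 'M[R]_n := H^T *m H.

Definition Fmx (R : realType) (N n : nat) (H : 'M[R]_(N, n)) (Rm : 'M[R]_n) : 'M[R]_n :=
  Rm *m invmx (gram H + Rm).

Definition Far (R : realType) (N n : nat) (H : 'M[R]_(N, n)) (c : nat) (Rm : 'M[R]_n)
  : 'M[R]_n := invmx (gram H) *m (Fmx H Rm) ^+ c.+1.

Definition Cond (R : realType) (N n : nat) (H : 'M[R]_(N, n)) (Rm : 'M[R]_n) : R :=
  specnorm (gram H + Rm) * specnorm (invmx (gram H + Rm)).

Definition Obj (R : realType) (N n : nat) (H : 'M[R]_(N, n)) (c : nat) (Rm : 'M[R]_n) : R :=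
  specnorm (Far H c Rm) * Cond H Rm.

(* Main.v *)
Require Import Defs.
From HB Require Import structures.
From mathcomp Require Import all_boot all_order all_algebra.
From mathcomp Require Import boolp classical_sets reals.
From mathcomp Require Import lra ring.
Import Order.TTheory GRing.Theory Num.Theory.
Local Open Scope ring_scope.
Set Implicit Arguments. Unset Strict Implicit. Unset Printing Implicit Defensive.

Definition dot {R : realType} {n : nat} (u v : 'cV[R]_n) : R := (u^T *m v) 0 0.
Definition Qf {R : realType} {n : nat} (A : 'M[R]_n) (x : 'cV[R]_n) : R := dot x (A *m x).

Lemma dotE {R : realType} {n : nat} (u v : 'cV[R]_n) : dot u v = \sum_i u i 0 * v i 0.
Proof. by rewrite /dot mxE; apply: eq_bigr => i _; rewrite mxE. Qed.

Lemma dotC {R : realType} {n : nat} (u v : 'cV[R]_n) : dot u v = dot v u.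
Proof. by rewrite !dotE; apply: eq_bigr => i _; rewrite mulrC. Qed.

Lemma dotDr {R : realType} {n : nat} (u v w : 'cV[R]_n) : dot u (v + w) = dot u v + dot u w.
Proof. by rewrite !dotE -big_split; apply: eq_bigr => i _; rewrite mxE mulrDr. Qed.

Lemma dotDl {R : realType} {n : nat} (u v w : 'cV[R]_n) : dot (v + w) u = dot v u + dot w u.
Proof. by rewrite dotC dotDr !(dotC u). Qed.

Lemma dotZr {R : realType} {n : nat} (k : R) (u v : 'cV[R]_n) : dot u (k *: v) = k * dot u v.
Proof. by rewrite !dotE mulr_sumr; apply: eq_bigr => i _; rewrite mxE mulrCA. Qed.

Lemma dotZl {R : realType} {n : nat} (k : R) (u v : 'cV[R]_n) : dot (k *: v) u = k * dot v u.
Proof. by rewrite dotC dotZr dotC. Qed.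

Lemma dot0r {R : realType} {n : nat} (u : 'cV[R]_n) : dot u 0 = 0.
Proof. by rewrite dotE big1 // => i _; rewrite mxE mulr0. Qed.

Lemma dot_ge0 {R : realType} {n : nat} (u : 'cV[R]_n) : 0 <= dot u u.
Proof. by rewrite dotE sumr_ge0 // => i _; rewrite -expr2 sqr_ge0. Qed.

Lemma dot_eq0 {R : realType} {n : nat} (u : 'cV[R]_n) : dot u u = 0 -> u = 0.
Proof.
rewrite dotE => h; apply/matrixP => i j; rewrite (ord1 j) mxE.
have H := psumr_eq0P (P := xpredT) (F := fun i => u i 0 * u i 0).
have /eqP := H (fun i _ => ltac:(by rewrite -expr2 sqr_ge0)) h i isT.
by rewrite mulf_eq0 orbb => /eqP.
Qed.

Lemma vnorm2E {R : realType} {n : nat} (u : 'cV[R]_n) : vnorm2 u = Num.sqrt (dot u u).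
Proof. by rewrite /vnorm2 dotE; congr Num.sqrt; apply: eq_bigr => i _; rewrite expr2. Qed.

Lemma vnorm2_ge0 {R : realType} {n : nat} (u : 'cV[R]_n) : 0 <= vnorm2 u.
Proof. by rewrite vnorm2E sqrtr_ge0. Qed.

Lemma vnorm2_sq {R : realType} {n : nat} (u : 'cV[R]_n) : vnorm2 u ^+ 2 = dot u u.
Proof. by rewrite vnorm2E sqr_sqrtr // dot_ge0. Qed.

Lemma vnorm2_eq0 {R : realType} {n : nat} (u : 'cV[R]_n) : vnorm2 u = 0 -> u = 0.
Proof. by move=> h; apply: dot_eq0; rewrite -vnorm2_sq h expr0n. Qed.

Lemma vnorm2_0 {R : realType} {n : nat} : vnorm2 (0 : 'cV[R]_n) = 0.
Proof. by rewrite vnorm2E dot0r sqrtr0. Qed.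

Lemma vnorm2Z {R : realType} {n : nat} (k : R) (u : 'cV[R]_n) : vnorm2 (k *: u) = `|k| * vnorm2 u.
Proof.
by rewrite !vnorm2E dotZl dotZr mulrA -expr2 sqrtrM ?sqr_ge0 // sqrtr_sqr.
Qed.

Lemma sq_le {R : realType} (a b : R) : 0 <= a -> 0 <= b -> a ^+ 2 <= b ^+ 2 -> a <= b.
Proof.
move=> ha hb h; rewrite leNgt; apply/negP => hab.
have : b * b < a * a.
  apply: (le_lt_trans (y := b * a)); first by rewrite ler_wpM2l // ltW.
  by rewrite ltr_pM2r // (le_lt_trans hb).
rewrite -!expr2; lra.
Qed.

Lemma CS_gen {R : realType} {n : nat} (A : 'M[R]_n) (u v : 'cV[R]_n) :
  A^T = A -> (forall x, 0 <= Qf A x) -> dot u (A *m v) ^+ 2 <= Qf A u * Qf A v.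
Proof.
move=> hs hp.
have key : forall t : R, 0 <= Qf A u + 2 * t * dot u (A *m v) + t ^+ 2 * Qf A v.
  move=> t; have := hp (u + t *: v).
  rewrite /Qf mulmxDr -scalemxAr !dotDl !dotDr !dotZl !dotZr.
  have -> : dot v (A *m u) = dot u (A *m v).
    by rewrite dotC /dot -{1}hs trmx_mul trmxK mulmxA.
  move=> h; apply: (le_trans h); rewrite le_eqVlt; apply/orP; left; apply/eqP; ring.
move: key (hp u) (hp v).
generalize (Qf A u) (Qf A v) (dot u (A *m v)) => a c b key ha hc.
have [c0|cpos] := eqVneq c 0.
  have [b0|bn0] := eqVneq b 0; first by rewrite b0 c0 expr0n mulr0.
  have := key (- (a + 1) / (2 * b)); rewrite c0 mulr0.
  have -> : 2 * (- (a + 1) / (2 * b)) * b = - (a + 1) by field; rewrite bn0.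
  lra.
have cp : 0 < c by rewrite lt_neqAle eq_sym cpos hc.
have := key (- b / c).
have -> : a + 2 * (- b / c) * b + (- b / c) ^+ 2 * c = a - b ^+ 2 / c.
  by field; rewrite cpos.
by rewrite subr_ge0 ler_pdivrMr // mulrC.
Qed.

Lemma Qf1 {R : realType} {n : nat} (x : 'cV[R]_n) : Qf 1%:M x = dot x x.
Proof. by rewrite /Qf mul1mx. Qed.

Lemma CS_sq {R : realType} {n : nat} (u v : 'cV[R]_n) : dot u v ^+ 2 <= dot u u * dot v v.
Proof.
have := @CS_gen R n 1%:M u v (tr_scalar_mx _ _) (fun x => ltac:(by rewrite Qf1 dot_ge0)).
by rewrite !Qf1 mul1mx.
Qed.

Lemma CS_abs {R : realType} {n : nat} (u v : 'cV[R]_n) : `|dot u v| <= vnorm2 u * vnorm2 v.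
Proof.
apply: sq_le; rewrite ?mulr_ge0 ?vnorm2_ge0 //.
by rewrite real_normK ?num_real // exprMn !vnorm2_sq CS_sq.
Qed.

Lemma CS {R : realType} {n : nat} (u v : 'cV[R]_n) : dot u v <= vnorm2 u * vnorm2 v.
Proof. exact: le_trans (ler_norm _) (CS_abs u v). Qed.

Lemma vnorm2D {R : realType} {n : nat} (u v : 'cV[R]_n) : vnorm2 (u + v) <= vnorm2 u + vnorm2 v.
Proof.
apply: sq_le; rewrite ?addr_ge0 ?vnorm2_ge0 //.
rewrite vnorm2_sq dotDl !dotDr (dotC v u) sqrrD !vnorm2_sq.
have := CS u v; lra.
Qed.

Lemma vnorm2N {R : realType} {n : nat} (u : 'cV[R]_n) : vnorm2 (- u) = vnorm2 u.
Proof. by rewrite -scaleN1r vnorm2Z normrN normr1 mul1r. Qed.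

Lemma vnorm2_sum {R : realType} {n k : nat} (f : 'I_k -> 'cV[R]_n) :
  vnorm2 (\sum_(j < k) f j) <= \sum_(j < k) vnorm2 (f j).
Proof.
apply: (big_ind2 (fun v r => vnorm2 v <= r)); first by rewrite vnorm2_0.
  by move=> x1 x2 y1 y2 h1 h2; apply: le_trans (vnorm2D _ _) (lerD h1 h2).
by [].
Qed.

Lemma coord_le {R : realType} {n : nat} (x : 'cV[R]_n) j : `|x j 0| <= vnorm2 x.
Proof.
apply: sq_le; rewrite ?vnorm2_ge0 // real_normK ?num_real // vnorm2_sq dotE.
rewrite (bigD1 j) //= -expr2 lerDl sumr_ge0 // => i _; by rewrite -expr2 sqr_ge0.
Qed.

Definition colK {R : realType} {n : nat} (A : 'M[R]_n) : R := \sum_(j < n) vnorm2 (col j A).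

Lemma mulmx_col {R : realType} {n : nat} (A : 'M[R]_n) (x : 'cV[R]_n) :
  A *m x = \sum_(j < n) x j 0 *: col j A.
Proof.
apply/matrixP => i k; rewrite (ord1 k) !mxE summxE; apply: eq_bigr => j _.
by rewrite !mxE mulrC.
Qed.

Lemma colK_bound {R : realType} {n : nat} (A : 'M[R]_n) (x : 'cV[R]_n) :
  vnorm2 (A *m x) <= colK A * vnorm2 x.
Proof.
rewrite mulmx_col /colK mulr_suml; apply: le_trans (vnorm2_sum _) _.
apply: ler_sum => j _; rewrite vnorm2Z mulrC ler_wpM2l ?vnorm2_ge0 //.
exact: coord_le.
Qed.

Definition SN {R : realType} {n : nat} (A : 'M[R]_n) : set R :=
  [set r : R | exists x : 'cV[R]_n, vnorm2 x <= 1 /\ r = vnorm2 (A *m x)].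

Lemma SN_has_sup {R : realType} {n : nat} (A : 'M[R]_n) : has_sup (SN A).
Proof.
split; first by exists 0, 0; rewrite vnorm2_0 ler01 mulmx0 vnorm2_0.
exists (colK A) => r [x [hx ->]]; apply: le_trans (colK_bound A x) _.
apply: ler_piMr hx.
by rewrite /colK sumr_ge0 // => j _; rewrite vnorm2_ge0.
Qed.

Lemma specnorm_ge0 {R : realType} {n : nat} (A : 'M[R]_n) : 0 <= specnorm A.
Proof.
apply: (sup_upper_bound (SN_has_sup A)); exists 0.
by rewrite vnorm2_0 ler01 mulmx0 vnorm2_0.
Qed.

Lemma specnorm_bound {R : realType} {n : nat} (A : 'M[R]_n) (x : 'cV[R]_n) :
  vnorm2 (A *m x) <= specnorm A * vnorm2 x.
Proof.
have [->|xn0] := eqVneq x 0; first by rewrite mulmx0 vnorm2_0 mulr0.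
have hp : 0 < vnorm2 x.
  rewrite lt_neqAle vnorm2_ge0 andbT eq_sym; apply/eqP => /vnorm2_eq0 h.
  by rewrite h eqxx in xn0.
have h1 : vnorm2 (A *m ((vnorm2 x)^-1 *: x)) <= specnorm A.
  apply: (sup_upper_bound (SN_has_sup A)); exists ((vnorm2 x)^-1 *: x); split => //.
  by rewrite vnorm2Z ger0_norm ?invr_ge0 ?vnorm2_ge0 // mulVf // gt_eqF.
move: h1; rewrite -scalemxAr vnorm2Z ger0_norm ?invr_ge0 ?vnorm2_ge0 //.
by rewrite ler_pdivrMl // mulrC.
Qed.

Lemma specnorm_le {R : realType} {n : nat} (A : 'M[R]_n) (K : R) :
  0 <= K -> (forall x, vnorm2 (A *m x) <= K * vnorm2 x) -> specnorm A <= K.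
Proof.
move=> hK h; apply: ge_sup; first by exists 0, 0; rewrite vnorm2_0 ler01 mulmx0 vnorm2_0.
move=> r [x [hx ->]]; apply: le_trans (h x) _; exact: ler_piMr.
Qed.

Lemma dot_mulmx {R : realType} {n : nat} (A : 'M[R]_n) (u v : 'cV[R]_n) :
  dot u (A *m v) = dot (A^T *m u) v.
Proof. by rewrite /dot trmx_mul trmxK mulmxA. Qed.

Lemma dot_sym {R : realType} {n : nat} (A : 'M[R]_n) (u v : 'cV[R]_n) :
  A^T = A -> dot u (A *m v) = dot (A *m u) v.
Proof. by move=> hs; rewrite dot_mulmx hs. Qed.

Lemma QfE {R : realType} {n : nat} (A : 'M[R]_n) (x : 'cV[R]_n) :
  (x^T *m A *m x) 0 0 = Qf A x.
Proof. by rewrite /Qf /dot mulmxA. Qed.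

Lemma mulmx_shift {R : realType} {n : nat} (A : 'M[R]_n) (mu : R) (x : 'cV[R]_n) :
  (A + mu%:M) *m x = A *m x + mu *: x.
Proof. by rewrite mulmxDl mul_scalar_mx. Qed.

Lemma Qf_shift {R : realType} {n : nat} (A : 'M[R]_n) (mu : R) (x : 'cV[R]_n) :
  Qf (A + mu%:M) x = Qf A x + mu * dot x x.
Proof. by rewrite /Qf mulmx_shift dotDr dotZr. Qed.

Lemma sym_shift {R : realType} {n : nat} (A : 'M[R]_n) (mu : R) :
  A^T = A -> (A + mu%:M)^T = A + mu%:M.
Proof. by move=> hs; rewrite linearD /= hs tr_scalar_mx. Qed.

Lemma posdef_psd {R : realType} {n : nat} (A : 'M[R]_n) :
  posdef A -> forall x, 0 <= Qf A x.
Proof.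
case=> _ hp x; have [->|xn0] := eqVneq x 0; first by rewrite /Qf mulmx0 dot0r.
by apply: ltW; rewrite -QfE hp.
Qed.

Lemma posdef_shift {R : realType} {n : nat} (A : 'M[R]_n) (mu : R) :
  posdef A -> 0 <= mu -> posdef (A + mu%:M).
Proof.
move=> [hs hp] hmu; split; first exact: sym_shift.
move=> x xn0; rewrite QfE Qf_shift -QfE.
by apply: ltr_wpDr; [rewrite mulr_ge0 ?dot_ge0 | exact: hp].
Qed.

Lemma posdef_unit {R : realType} {n : nat} (A : 'M[R]_n) : posdef A -> A \in unitmx.
Proof.
move=> [hs hp]; rewrite -row_free_unit -kermx_eq0; apply/eqP.
apply/row_matrixP => i; rewrite row0; apply/eqP/negP => hn; apply: hn.
set v := row i (kermx A).
have hv : A *m v^T = 0.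
  by rewrite -hs -trmx_mul /v -row_mul mulmx_ker row0 trmx0.
apply/eqP; rewrite -(trmxK v).
have: ~~ (0 < (v^T^T *m A *m v^T) 0 0) by rewrite -mulmxA hv mulmx0 mxE ltxx.
apply: contraNeq => hvn; apply: hp; apply: contraNneq hvn => ->.
by rewrite trmx0.
Qed.

Lemma sym_inv {R : realType} {n : nat} (A : 'M[R]_n) : A^T = A -> (invmx A)^T = invmx A.
Proof. by move=> hs; rewrite trmx_inv hs. Qed.

Lemma vnorm2_gt0 {R : realType} {n : nat} (x : 'cV[R]_n) : x != 0 -> 0 < vnorm2 x.
Proof.
move=> xn0; rewrite lt_neqAle vnorm2_ge0 andbT eq_sym; apply/eqP => /vnorm2_eq0 h.
by rewrite h eqxx in xn0.
Qed.

Lemma normalize_unit {R : realType} {n : nat} (x : 'cV[R]_n) : x != 0 ->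
  vnorm2 ((vnorm2 x)^-1 *: x) = 1.
Proof.
move=> xn0; have hp := vnorm2_gt0 xn0.
by rewrite vnorm2Z ger0_norm ?invr_ge0 ?vnorm2_ge0 // mulVf // gt_eqF.
Qed.

Lemma unit_exists {R : realType} {n : nat} : (0 < n)%N -> exists x : 'cV[R]_n, vnorm2 x = 1.
Proof.
move=> hn; exists ((vnorm2 (const_mx 1 : 'cV[R]_n))^-1 *: const_mx 1).
apply: normalize_unit; apply/negP => /eqP /matrixP /(_ (Ordinal hn) 0).
by rewrite !mxE => /eqP; rewrite oner_eq0.
Qed.

Lemma Qf_scale {R : realType} {n : nat} (A : 'M[R]_n) (k : R) (x : 'cV[R]_n) :
  Qf A (k *: x) = k ^+ 2 * Qf A x.
Proof. by rewrite /Qf -scalemxAr dotZl dotZr mulrA -expr2. Qed.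

Lemma Qf_le_unit {R : realType} {n : nat} (A : 'M[R]_n) (r : R) :
  (forall x, vnorm2 x = 1 -> Qf A x <= r) -> forall x, Qf A x <= r * dot x x.
Proof.
move=> h x; have [->|xn0] := eqVneq x 0; first by rewrite /Qf mulmx0 !dot0r mulr0.
have hp := vnorm2_gt0 xn0.
have := h _ (normalize_unit xn0); rewrite Qf_scale -vnorm2_sq exprVn.
by rewrite ler_pdivrMl ?exprn_gt0 // mulrC.
Qed.

Lemma Qf_add {R : realType} {n : nat} (A : 'M[R]_n) (u v : 'cV[R]_n) : A^T = A ->
  Qf A (u + v) = Qf A u + 2 * dot u (A *m v) + Qf A v.
Proof.
move=> hs; rewrite /Qf mulmxDr !dotDl !dotDr (dotC v (A *m u)) -(dot_sym _ _ hs).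
by rewrite mulr2n mulrDl mul1r; ring.
Qed.

Lemma POL {R : realType} {n : nat} (A : 'M[R]_n) (r : R) :
  A^T = A -> (forall x, 0 <= Qf A x) -> 0 <= r ->
  (forall x, Qf A x <= r * dot x x) -> forall x, vnorm2 (A *m x) <= r * vnorm2 x.
Proof.
move=> hs hp hr hle.
have pol : forall u v, 2 * dot u (A *m v) <= r * (dot u u + dot v v).
  move=> u v.
  have e1 := Qf_add u v hs.
  have e2 := Qf_add u ((-1) *: v) hs.
  rewrite Qf_scale -scalemxAr dotZr in e2.
  have h1 := hle (u + v). have h2 := hp (u + (-1) *: v).
  have d1 : dot (u + v) (u + v) + dot (u + (-1) *: v) (u + (-1) *: v) = 2 * dot u u + 2 * dot v v.
    rewrite !dotDl !dotDr !dotZl !dotZr; ring.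
  have hd2 := dot_ge0 (u + (-1) *: v).
  have : 2 * dot u (A *m v) * 2 <= r * (dot (u + v) (u + v) + dot (u + (-1) *: v) (u + (-1) *: v)).
    rewrite mulrDr; have := mulr_ge0 hr hd2. 
    move: e1 e2 h1 h2; rewrite expr2 !mulN1r opprK mul1r; lra.
  rewrite d1 -mulrDr mulrCA -[_ * 2]mulrC ler_pM2l //; lra.
move=> x; have [->|xn0] := eqVneq x 0; first by rewrite mulmx0 !vnorm2_0 mulr0.
set s := vnorm2 (A *m x).
have [s0|sn0] := eqVneq s 0; first by rewrite s0 mulr_ge0 ?vnorm2_ge0.
have sp : 0 < s by rewrite lt_neqAle eq_sym sn0 vnorm2_ge0.
have ap := vnorm2_gt0 xn0; set a := vnorm2 x in ap *.
have := pol x ((a / s) *: (A *m x)).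
rewrite -scalemxAr dotZr dotZl dotZr (dot_sym x (A *m x) hs) -!vnorm2_sq -/s -/a.
have -> : 2 * (a / s * s ^+ 2) = (2 * a) * s by field; rewrite sn0.
have -> : r * (a ^+ 2 + a / s * (a / s * s ^+ 2)) = (2 * a) * (r * a) by field; rewrite sn0.
by rewrite ler_pM2l // mulr_gt0.
Qed.

Definition isSupQ {R : realType} {n : nat} (A : 'M[R]_n) (s : R) :=
  (forall x, vnorm2 x = 1 -> Qf A x <= s) /\
  (forall r, r < s -> exists x, vnorm2 x = 1 /\ r < Qf A x).

Definition isInfQ {R : realType} {n : nat} (A : 'M[R]_n) (m : R) :=
  (forall x, vnorm2 x = 1 -> m <= Qf A x) /\
  (forall r, m < r -> exists x, vnorm2 x = 1 /\ Qf A x < r).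

Lemma isSupQ_uniq {R : realType} {n : nat} (A : 'M[R]_n) s1 s2 :
  isSupQ A s1 -> isSupQ A s2 -> s1 = s2.
Proof.
move=> [a1 b1] [a2 b2]; apply/eqP; rewrite eq_le; apply/andP; split.
  rewrite leNgt; apply/negP => /b1 [x [hx hr]]; have := a2 x hx; rewrite leNgt hr //.
rewrite leNgt; apply/negP => /b2 [x [hx hr]]; have := a1 x hx; rewrite leNgt hr //.
Qed.

Lemma isInfQ_uniq {R : realType} {n : nat} (A : 'M[R]_n) s1 s2 :
  isInfQ A s1 -> isInfQ A s2 -> s1 = s2.
Proof.
move=> [a1 b1] [a2 b2]; apply/eqP; rewrite eq_le; apply/andP; split.
  rewrite leNgt; apply/negP => /b2 [x [hx hr]]; have := a1 x hx; rewrite leNgt hr //.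
rewrite leNgt; apply/negP => /b1 [x [hx hr]]; have := a2 x hx; rewrite leNgt hr //.
Qed.

Lemma isSupQ_shift {R : realType} {n : nat} (A : 'M[R]_n) s mu :
  isSupQ A s -> isSupQ (A + mu%:M) (s + mu).
Proof.
move=> [a b]; split.
  by move=> x hx; rewrite Qf_shift -vnorm2_sq hx expr1n mulr1 lerD2r a.
move=> r hr; have [|x [hx hq]] := b (r - mu); first by rewrite ltrBlDr.
by exists x; split => //; rewrite Qf_shift -vnorm2_sq hx expr1n mulr1 -ltrBlDr.
Qed.

Lemma isInfQ_shift {R : realType} {n : nat} (A : 'M[R]_n) s mu :
  isInfQ A s -> isInfQ (A + mu%:M) (s + mu).
Proof.
move=> [a b]; split.
  by move=> x hx; rewrite Qf_shift -vnorm2_sq hx expr1n mulr1 lerD2r a.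
move=> r hr; have [|x [hx hq]] := b (r - mu); first by rewrite ltrBrDr.
by exists x; split => //; rewrite Qf_shift -vnorm2_sq hx expr1n mulr1 -ltrBrDr.
Qed.

Lemma SUP {R : realType} {n : nat} (A : 'M[R]_n) : (0 < n)%N ->
  A^T = A -> (forall x, 0 <= Qf A x) -> isSupQ A (specnorm A).
Proof.
move=> hn hs hp; split.
  move=> x hx; apply: le_trans (CS _ _) _; rewrite hx mul1r.
  by apply: le_trans (specnorm_bound A x) _; rewrite hx mulr1.
move=> r hr; case: (pselect (exists x, vnorm2 x = 1 /\ r < Qf A x)) => // hn'.
exfalso.
have hle : forall x, vnorm2 x = 1 -> Qf A x <= r.
  move=> x hx; rewrite leNgt; apply/negP => hlt; apply: hn'; by exists x.
have [x0 hx0] := @unit_exists R n hn.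
have r0 : 0 <= r by apply: le_trans (hp x0) (hle x0 hx0).
have := specnorm_le r0 (POL hs hp r0 (Qf_le_unit hle)).
by rewrite leNgt hr.
Qed.

Lemma QfB {R : realType} {n : nat} (A : 'M[R]_n) (y : 'cV[R]_n) :
  A \in unitmx -> Qf (invmx A) y = Qf A (invmx A *m y).
Proof.
by move=> hu; rewrite /Qf mulKVmx // dotC.
Qed.

Lemma inv_psd {R : realType} {n : nat} (A : 'M[R]_n) :
  posdef A -> forall y, 0 <= Qf (invmx A) y.
Proof. by move=> hA y; rewrite QfB ?posdef_unit // posdef_psd. Qed.

Lemma INF_a {R : realType} {n : nat} (A : 'M[R]_n) : (0 < n)%N -> posdef A ->
  forall x, vnorm2 x = 1 -> 1 <= Qf A x * specnorm (invmx A).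
Proof.
move=> hn hA x hx; have hu := posdef_unit hA.
have hs := hA.1.
have [supa _] := SUP hn (sym_inv hs) (inv_psd hA).
have := CS_gen x (invmx A *m x) hs (posdef_psd hA).
rewrite mulKVmx // -vnorm2_sq hx expr1n expr1n -QfB // => h.
apply: le_trans h _; rewrite ler_wpM2l ?posdef_psd //; exact: supa.
Qed.

Lemma INF_hpos {R : realType} {n : nat} (A : 'M[R]_n) : (0 < n)%N -> posdef A ->
  0 < specnorm (invmx A).
Proof.
move=> hn hA; have [x hx] := @unit_exists R n hn.
have := INF_a hn hA hx; have := posdef_psd hA x; have := specnorm_ge0 (invmx A).
move: (Qf A x) (specnorm (invmx A)) => q h h0 q0 h1.
rewrite lt_neqAle h0 andbT; apply/eqP => e; rewrite -e mulr0 in h1; lra.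
Qed.

Lemma INF {R : realType} {n : nat} (A : 'M[R]_n) : (0 < n)%N -> posdef A ->
  isInfQ A (specnorm (invmx A))^-1.
Proof.
move=> hn hA; have hu := posdef_unit hA; have hs := hA.1.
have hp := INF_hpos hn hA; set h := specnorm (invmx A) in hp *.
split.
  by move=> x hx; rewrite -[h^-1]mul1r ler_pdivrMr //; exact: INF_a.
move=> r hr.
have rp : 0 < r by apply: lt_trans hr; rewrite invr_gt0.
have hr' : r^-1 < h by rewrite -(invrK h) ltf_pV2 // ?posrE ?invr_gt0.
have [_ supb] := SUP hn (sym_inv hs) (inv_psd hA).
have [y [hy hq]] := supb _ hr'.
set z := invmx A *m y.
set p := Qf (invmx A) y in hq.
have pp : 0 < p by apply: lt_trans hq; rewrite invr_gt0.
have pz : p <= vnorm2 z.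
  by have := CS y z; rewrite hy mul1r.
have zn0 : z != 0 by apply/negP => /eqP ez; move: pz; rewrite ez vnorm2_0; lra.
have zp := vnorm2_gt0 zn0.
exists ((vnorm2 z)^-1 *: z); split; first exact: normalize_unit.
rewrite Qf_scale -QfB // -/p exprVn ltr_pdivrMl ?exprn_gt0 //.
have rp1 : 1 < r * p by rewrite -ltr_pdivrMl // mulr1.
have : p ^+ 2 <= vnorm2 z ^+ 2 by rewrite lerXn2r // ?nnegrE ltW.
move: (vnorm2 z ^+ 2) => w hw.
have : r * p ^+ 2 <= r * w by rewrite ler_wpM2l // ltW.
rewrite expr2; nra.
Qed.

Lemma ineq_C {R : realType} (t m g q s : R) : 0 <= t -> t <= 1 -> 0 <= m -> 0 <= g -> 0 <= q -> 0 <= s ->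
 t^+2 * (g + 2 * m * q + m^+2 * s) <= g + 2 * (t * m) * q + (t * m)^+2 * s.
Proof.
move=> *.
have h1 : 0 <= (1 - t^+2) * g by rewrite mulr_ge0 // subr_ge0 expr_le1.
have h2 : 0 <= (t * (1 - t)) * (m * q) by rewrite !mulr_ge0 // subr_ge0.
have e : g + 2 * (t * m) * q + (t * m)^+2 * s - t^+2 * (g + 2 * m * q + m^+2 * s) = (1 - t^+2) * g + 2 * ((t * (1 - t)) * (m * q)) by ring.
rewrite -subr_ge0 e; lra.
Qed.

Lemma norm_shift_sq {R : realType} {n : nat} (G : 'M[R]_n) (mu : R) (z : 'cV[R]_n) :
  vnorm2 ((G + mu%:M) *m z) ^+ 2 = vnorm2 (G *m z) ^+ 2 + 2 * mu * Qf G z + mu ^+ 2 * vnorm2 z ^+ 2.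
Proof.
rewrite !vnorm2_sq mulmx_shift /Qf !dotDl !dotDr !dotZl !dotZr (dotC z (G *m z)).
rewrite mulr2n; ring.
Qed.

Lemma pow_contract {R : realType} {n : nat} (M : 'M[R]_n) :
  (forall y, vnorm2 (M *m y) <= vnorm2 y) -> forall k y, vnorm2 ((M ^+ k) *m y) <= vnorm2 y.
Proof.
move=> h; elim=> [|k IH] y; first by rewrite expr0 mul1mx.
by rewrite exprS -mulmxE -mulmxA; apply: le_trans (h _) (IH y).
Qed.

Lemma FmxE {R : realType} {N n : nat} (H : 'M[R]_(N, n)) (mu : R) :
  Fmx H mu%:M = mu *: invmx (gram H + mu%:M).
Proof. by rewrite /Fmx mul_scalar_mx. Qed.

Lemma K_contract {R : realType} {N n : nat} (H : 'M[R]_(N, n)) (mu : R) :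
  posdef (gram H) -> 0 < mu -> forall y, vnorm2 (Fmx H mu%:M *m y) <= vnorm2 y.
Proof.
move=> hG hmu y; set G := gram H in hG *.
have hu : (G + mu%:M) \in unitmx by apply: posdef_unit; apply: posdef_shift => //; exact: ltW.
rewrite FmxE -scalemxAl; set z := invmx _ *m y.
have -> : y = (G + mu%:M) *m z by rewrite /z mulKVmx.
rewrite vnorm2Z (ger0_norm (ltW hmu)).
apply: sq_le; rewrite ?mulr_ge0 ?vnorm2_ge0 ?(ltW hmu) // norm_shift_sq exprMn.
have := posdef_psd hG z; have := sqr_ge0 (vnorm2 (G *m z)); have := mulr_ge0 (ltW hmu) (posdef_psd hG z).
lra.
Qed.

Lemma shift_comm {R : realType} {n : nat} (A : 'M[R]_n) (d : R) : A \in unitmx ->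
  (A + d%:M) *m invmx A = invmx A *m (A + d%:M).
Proof.
move=> hu; rewrite mulmxDl mulmxDr mulmxV // mulVmx // mul_scalar_mx mul_mx_scalar //.
Qed.

Lemma Far_mono {R : realType} {N n : nat} (H : 'M[R]_(N, n)) (c : nat) (mu1 mu2 : R) :
  posdef (gram H) -> 0 < mu1 -> mu1 <= mu2 ->
  specnorm (Far H c mu1%:M) <= specnorm (Far H c mu2%:M).
Proof.
move=> hG h1 h12; set G := gram H in hG *.
have h2 : 0 < mu2 by apply: lt_le_trans h12.
have hu1 : (G + mu1%:M) \in unitmx by apply: posdef_unit; apply: posdef_shift => //; exact: ltW.
have hu2 : (G + mu2%:M) \in unitmx by apply: posdef_unit; apply: posdef_shift => //; exact: ltW.
set A1 := G + mu1%:M in hu1 *; set A2 := G + mu2%:M in hu2 *.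
have eA : A2 = A1 + (mu2 - mu1)%:M by rewrite /A1 /A2 -addrA -raddfD addrCA subrr addr0.
set C := (mu1 / mu2) *: (A2 *m invmx A1).
have eK1 : Fmx H mu2%:M *m C = Fmx H mu1%:M.
  rewrite !FmxE -/G -/A1 -/A2 /C -scalemxAr -scalemxAl mulmxA mulVmx // mul1mx scalerA.
  by congr (_ *: _); field; rewrite gt_eqF.
have eK2 : C *m Fmx H mu2%:M = Fmx H mu1%:M.
  rewrite !FmxE -/G -/A1 -/A2 /C -scalemxAr -scalemxAl scalerA.
  rewrite eA shift_comm // -eA -mulmxA mulmxV // mulmx1.
  by congr (_ *: _); field; rewrite gt_eqF.
have hcomm : GRing.comm (Fmx H mu2%:M) C by rewrite /GRing.comm -!mulmxE eK1 eK2.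
have eF : Far H c mu1%:M = Far H c mu2%:M *m C ^+ c.+1.
  by rewrite /Far -eK1 mulmxE exprMn_comm // -!mulmxE mulmxA.
have Cc : forall y, vnorm2 (C *m y) <= vnorm2 y.
  move=> y; set z := invmx A1 *m y.
  have -> : y = A1 *m z by rewrite /z mulKVmx.
  rewrite /C -scalemxAl -mulmxA mulKmx // vnorm2Z.
  have tp : 0 < mu1 / mu2 by rewrite divr_gt0.
  rewrite (ger0_norm (ltW tp)).
  apply: sq_le; [by rewrite mulr_ge0 ?vnorm2_ge0 ?(ltW tp)|exact: vnorm2_ge0|].
  rewrite exprMn /A1 /A2 !norm_shift_sq.
  have key := @ineq_C R (mu1 / mu2) mu2 (vnorm2 (G *m z) ^+ 2) (Qf G z) (vnorm2 z ^+ 2)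
    (ltW tp) ltac:(by rewrite ler_pdivrMr // mul1r) (ltW h2) (sqr_ge0 _) (posdef_psd hG z) (sqr_ge0 _).
  by rewrite (_ : mu1 / mu2 * mu2 = mu1) in key; last by field; rewrite gt_eqF.
apply: specnorm_le; first exact: specnorm_ge0.
move=> x; rewrite eF -mulmxA; apply: le_trans (specnorm_bound _ _) _.
by rewrite ler_wpM2l ?specnorm_ge0 // pow_contract.
Qed.

Lemma Far_bound {R : realType} {N n : nat} (H : 'M[R]_(N, n)) (c : nat) (mu : R) :
  posdef (gram H) -> 0 < mu -> specnorm (Far H c mu%:M) <= specnorm (invmx (gram H)).
Proof.
move=> hG hmu; apply: specnorm_le; first exact: specnorm_ge0.
move=> x; rewrite /Far -mulmxA; apply: le_trans (specnorm_bound _ _) _.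
by rewrite ler_wpM2l ?specnorm_ge0 // pow_contract // => y; apply: K_contract.
Qed.

Lemma specnorm0 {R : realType} {n : nat} : specnorm (0 : 'M[R]_n) = 0.
Proof.
apply/eqP; rewrite eq_le specnorm_ge0 andbT; apply: specnorm_le => // x.
by rewrite mul0mx vnorm2_0 mul0r.
Qed.

Lemma specnorm_n0 {R : realType} (A : 'M[R]_0) : specnorm A = 0.
Proof.
apply/eqP; rewrite eq_le specnorm_ge0 andbT; apply: specnorm_le => // x.
by rewrite /vnorm2 big_ord0 sqrtr0 mul0r.
Qed.

Lemma norm_shift {R : realType} {n : nat} (G : 'M[R]_n) (mu : R) : (0 < n)%N ->
  posdef G -> 0 <= mu -> specnorm (G + mu%:M) = specnorm G + mu.
Proof.
move=> hn hG hmu; have hG' := posdef_shift hG hmu.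
apply: (isSupQ_uniq (A := G + mu%:M)).
  exact: SUP hn hG'.1 (posdef_psd hG').
exact: isSupQ_shift (SUP hn hG.1 (posdef_psd hG)).
Qed.

Lemma inorm_shift {R : realType} {n : nat} (G : 'M[R]_n) (mu : R) : (0 < n)%N ->
  posdef G -> 0 <= mu ->
  (specnorm (invmx (G + mu%:M)))^-1 = (specnorm (invmx G))^-1 + mu.
Proof.
move=> hn hG hmu; have hG' := posdef_shift hG hmu.
apply: (isInfQ_uniq (A := G + mu%:M)); first exact: INF hn hG'.
exact: isInfQ_shift (INF hn hG).
Qed.

Lemma CondE {R : realType} {N n : nat} (H : 'M[R]_(N, n)) (mu : R) : (0 < n)%N ->
  posdef (gram H) -> 0 <= mu ->
  Cond H mu%:M = (specnorm (gram H) + mu) / ((specnorm (invmx (gram H)))^-1 + mu).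
Proof.
move=> hn hG hmu; rewrite /Cond norm_shift // -inorm_shift // invrK //.
Qed.

Lemma m_le_g {R : realType} {n : nat} (G : 'M[R]_n) : (0 < n)%N -> posdef G ->
  (specnorm (invmx G))^-1 <= specnorm G.
Proof.
move=> hn hG; have [x hx] := @unit_exists R n hn.
apply: le_trans ((INF hn hG).1 x hx) _.
exact: (SUP hn hG.1 (posdef_psd hG)).1 x hx.
Qed.

Lemma Cond_n0 {R : realType} {N : nat} (H : 'M[R]_(N, 0)) (Rm : 'M[R]_0) : Cond H Rm = 0.
Proof. by rewrite /Cond !specnorm_n0 mulr0. Qed.

Lemma Far0 {R : realType} {N n : nat} (H : 'M[R]_(N, n)) (c : nat) : Far H c 0 = 0.
Proof. by rewrite /Far /Fmx mul0mx expr0n /= mulmx0. Qed.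

Lemma Cond_ge0 {R : realType} {N n : nat} (H : 'M[R]_(N, n)) (Rm : 'M[R]_n) : 0 <= Cond H Rm.
Proof. by rewrite /Cond mulr_ge0 ?specnorm_ge0. Qed.

Theorem proposition1 (R : realType) (N n : nat) (H : 'M[R]_(N, n)) (c : nat) :
  posdef (gram H) ->
  (* Cond(mu I) is bounded and decreasing (nonincreasing) on mu > 0 *)
  ((exists M : R, forall mu : R, 0 < mu -> `|Cond H (mu%:M)| <= M) /\
   (forall mu1 mu2 : R, 0 < mu1 -> mu1 <= mu2 ->
      Cond H (mu2%:M) <= Cond H (mu1%:M))) /\
  (* ||F_ar(mu I)|| is bounded and increasing (nondecreasing) on mu > 0 *)
  ((exists M : R, forall mu : R, 0 < mu -> `|specnorm (Far H c (mu%:M))| <= M) /\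
   (forall mu1 mu2 : R, 0 < mu1 -> mu1 <= mu2 ->
      specnorm (Far H c (mu1%:M)) <= specnorm (Far H c (mu2%:M)))) /\
  (* min over R in S_+^n of Obj(R) is attained *)
  (exists R0 : 'M[R]_n, psd R0 /\
     forall Rm : 'M[R]_n, psd Rm -> Obj H c R0 <= Obj H c Rm).
Proof.
move=> hG; split; [|split].
- case: (posnP n) => [n0|hn].
    subst n; split; first by exists 0 => mu _; rewrite Cond_n0 normr0.
    by move=> *; rewrite !Cond_n0.
  have mp : 0 < (specnorm (invmx (gram H)))^-1 by rewrite invr_gt0 INF_hpos.
  have mg := m_le_g hn hG.
  move: mp mg; set m := _^-1; set g := specnorm (gram H) => mp mg.
  split.
    exists (g / m) => mu hmu; rewrite ger0_norm ?Cond_ge0 // CondE ?(ltW hmu) // -/m -/g.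
    rewrite (ler_pdivrMr _ _ (addr_gt0 mp hmu)) mulrAC (ler_pdivlMr _ _ mp).
    have := mulr_ge0 (ltW hmu) (ltac:(by rewrite subr_ge0) : 0 <= g - m); nra.
  move=> mu1 mu2 h1 h12; have h2 : 0 < mu2 by apply: lt_le_trans h12.
  rewrite (CondE hn hG (ltW h1)) (CondE hn hG (ltW h2)) -/m -/g.
  rewrite (ler_pdivrMr _ _ (addr_gt0 mp h2)) mulrAC (ler_pdivlMr _ _ (addr_gt0 mp h1)).
  have := mulr_ge0 (ltac:(by rewrite subr_ge0) : 0 <= mu2 - mu1) (ltac:(by rewrite subr_ge0) : 0 <= g - m); nra.
- split; last by move=> mu1 mu2 h1 h12; apply: Far_mono.
  exists (specnorm (invmx (gram H))) => mu hmu.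
  by rewrite ger0_norm ?specnorm_ge0 // Far_bound.
- exists 0; split.
    by split; [rewrite trmx0 | move=> x; rewrite mulmx0 mul0mx mxE].
  move=> Rm _; rewrite /Obj Far0 specnorm0 mul0r.
  by rewrite mulr_ge0 ?specnorm_ge0 ?Cond_ge0.
Qed.
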